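(* Let $\{x_i\}_{i\in\mathcal{I}}$ and $\{y_i\}_{i\in\mathcal{I}}$ be two sequences of vectors in $\mathbb{R}^n$, $\mathcal{J}\subset\mathcal{I}$ a finite index subset, and $\lambda>0$. Let $A=\lambda I+\sum_{j\in\mathcal{J}}x_jx_j^\top$ and $B=\lambda I+\sum_{j\in\mathcal{J}}y_jy_j^\top$, and suppose $\mathrm{rank}(\{x_i\}_{i\in\mathcal{I}})=\mathrm{rank}(\{y_i\}_{i\in\mathcal{I}})=r$. Then for all $i\in\mathcal{I}$, $$\|x_i\|_{A^{-1}}\le\frac{1}{\sqrt\lambda}\|x_i-y_i\|_2+\left(1+\frac{2\sqrt r\sqrt{\sum_{j\in\mathcal{J}}\|x_j-y_j\|_2^2}}{\sqrt\lambda}\right)\|y_i\|_{B^{-1}}.$$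
   Context: For a positive definite matrix $M$, $\|x\|_M=\sqrt{x^\top Mx}$. *)

(* Defs.v *)
From HB Require Import structures.
From mathcomp Require Import all_boot all_order all_algebra.
Set Implicit Arguments. Unset Strict Implicit. Unset Printing Implicit Defensive.
Import Order.TTheory GRing.Theory Num.Theory.
Local Open Scope ring_scope.

Definition mnorm (R : rcfType) (n : nat) (M : 'M[R]_n) (v : 'cV[R]_n) : R :=
  Num.sqrt ((v^T *m M *m v) 0 0).

Definition norm2 (R : rcfType) (n : nat) (v : 'cV[R]_n) : R :=
  Num.sqrt ((v^T *m v) 0 0).

Definition fam_mx (R : rcfType) (n : nat) (I : Type) (x : I -> 'cV[R]_n)
  (s : seq I) : 'M[R]_(size s, n) :=
  \matrix_(k < size s, j < n) x (tnth (in_tuple s) k) j 0.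

(* rank of a (possibly infinite) family = dimension of its span
   = the maximal rank of a finite subfamily. *)
Definition fam_rank (R : rcfType) (n : nat) (I : Type) (x : I -> 'cV[R]_n)
  (r : nat) : Prop :=
  (exists s : seq I, \rank (fam_mx x s) = r) /\
  (forall s : seq I, (\rank (fam_mx x s) <= r)%N).

Definition gram (R : rcfType) (n : nat) (I : Type) (lam : R) (x : I -> 'cV[R]_n)
  (J : seq I) : 'M[R]_n :=
  lam%:M + \sum_(j <- J) x j *m (x j)^T.

(* Main.v *)
Require Import Defs.
From HB Require Import structures.
From mathcomp Require Import all_boot all_order all_algebra.
From mathcomp Require Import ring lra.
Import Order.TTheory GRing.Theory Num.Theory.
Set Implicit Arguments. Unset Strict Implicit. Unset Printing Implicit Defensive.
Local Open Scope ring_scope.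

Section S.
Variables (R : rcfType) (n : nat).
Implicit Types (M : 'M[R]_n) (u v w : 'cV[R]_n).

Definition Q M u v := (u^T *m M *m v) 0 0.

Lemma QDl M u w v : Q M (u + w) v = Q M u v + Q M w v.
Proof. by rewrite /Q linearD /= !mulmxDl mxE. Qed.
Lemma QZl M a u v : Q M (a *: u) v = a * Q M u v.
Proof. by rewrite /Q linearZ /= -!scalemxAl mxE. Qed.
Lemma QDr M u w v : Q M v (u + w) = Q M v u + Q M v w.
Proof. by rewrite /Q !mulmxDr mxE. Qed.
Lemma QZr M a u v : Q M v (a *: u) = a * Q M v u.
Proof. by rewrite /Q -!scalemxAr mxE. Qed.
Lemma QNl M u v : Q M (- u) v = - Q M u v.
Proof. by rewrite -scaleN1r QZl mulN1r. Qed.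
Lemma QNr M u v : Q M v (- u) = - Q M v u.
Proof. by rewrite -scaleN1r QZr mulN1r. Qed.
Lemma QBl M u w v : Q M (u - w) v = Q M u v - Q M w v.
Proof. by rewrite QDl QNl. Qed.
Lemma QBr M u w v : Q M v (u - w) = Q M v u - Q M v w.
Proof. by rewrite QDr QNr. Qed.
Lemma Q_sym M u v : M^T = M -> Q M u v = Q M v u.
Proof.
move=> sM; rewrite /Q.
have h : forall (A : 'M[R]_1), A 0 0 = A^T 0 0 by move=> A; rewrite mxE.
by rewrite h !trmx_mul trmxK sM mulmxA.
Qed.

End S.
Lemma disc (R : rcfType) (a b c : R) : 0 <= a -> (forall t, 0 <= a*t^+2 - 2*b*t + c) -> b^+2 <= a*c.
Proof.
move=> a0 H; have [az|az] := eqVneq a 0; rewrite ?az in H *.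
  have [->|bz] := eqVneq b 0; first by rewrite expr0n /= mul0r.
  have := H ((c+1)/(2*b)).
  have -> : 0 * ((c + 1) / (2 * b)) ^+ 2 - 2 * b * ((c + 1) / (2 * b)) + c = -1.
    by field.
  lra.
have ap : 0 < a by rewrite lt_def az.
have := H (b / a).
have -> : a * (b/a)^+2 - 2*b*(b/a) + c = c - b^+2 / a.
  by field.
rewrite subr_ge0 ler_pdivrMr // => h.
by rewrite mulrC.
Qed.

Section S2.
Variables (R : rcfType) (n : nat).
Implicit Types (M : 'M[R]_n) (u v w : 'cV[R]_n).

Lemma CS M u v : M^T = M -> (forall w, 0 <= Q M w w) ->
  Q M u v ^+ 2 <= Q M u u * Q M v v.
Proof.
move=> sM psd; apply: disc => [|t]; first exact: psd.
have := psd (t *: u - v).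
rewrite !(QBl, QBr, QZl, QZr) (Q_sym v u sM).
suff -> : t * (t * Q M u u - Q M u v) - (t * Q M u v - Q M v v) =
   Q M u u * t ^+ 2 - 2 * Q M u v * t + Q M v v by [].
ring.
Qed.

Lemma CSs M u v : M^T = M -> (forall w, 0 <= Q M w w) ->
  Q M u v <= Num.sqrt (Q M u u) * Num.sqrt (Q M v v).
Proof.
move=> sM psd; rewrite -sqrtrM ?psd //.
apply: (le_trans (ler_norm _)).
by rewrite -sqrtr_sqr ler_sqrt ?mulr_ge0 ?psd // CS.
Qed.

Lemma Q1E v w : Q 1%:M v w = \sum_k v k 0 * w k 0.
Proof. by rewrite /Q mulmx1 mxE; apply: eq_bigr => k _; rewrite mxE. Qed.

Lemma Q1_ge0 v : 0 <= Q 1%:M v v.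
Proof. by rewrite Q1E sumr_ge0 // => k _; rewrite -expr2 sqr_ge0. Qed.

Lemma Q1_eq0 v : Q 1%:M v v = 0 -> v = 0.
Proof.
rewrite Q1E => /eqP; rewrite psumr_eq0 => [/allP h|k _]; last by rewrite -expr2 sqr_ge0.
apply/matrixP => i j; rewrite (ord1 j) mxE.
by have := h i (mem_index_enum _); rewrite -expr2 sqrf_eq0 => /eqP.
Qed.

Lemma Q1_sym v w : Q 1%:M v w = Q 1%:M w v.
Proof. by apply: Q_sym; rewrite tr_scalar_mx. Qed.

End S2.

Lemma mx11Z (R : rcfType) (A : 'M[R]_1) a : (a *: A) 0 0 = a * A 0 0.
Proof. by rewrite mxE. Qed.
Lemma mx11D (R : rcfType) (A B : 'M[R]_1) : (A + B) 0 0 = A 0 0 + B 0 0.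
Proof. by rewrite mxE. Qed.

Section S3.
Variables (R : rcfType) (n : nat) (I : Type) (x : I -> 'cV[R]_n) (J : seq I) (lam : R).

Lemma Qgram v : Q (gram lam x J) v v = lam * Q 1%:M v v + \sum_(j <- J) Q 1%:M (x j) v ^+ 2.
Proof.
rewrite /Q /gram mulmxDr mulmxDl mx11D; congr (_ + _).
  by rewrite mul_mx_scalar -scalemxAl mx11Z mulmx1.
rewrite mulmx_sumr mulmx_suml summxE; apply: eq_bigr => j _.
rewrite !mulmxA -(mulmxA (v^T *m x j)) [v^T *m x j]mx11_scalar [(x j)^T *m v]mx11_scalar.
rewrite -scalar_mxM mxE /= mulr1n expr2 mulmx1; congr (_ * _).
by have := Q1_sym v (x j); rewrite /Q !mulmx1.
Qed.

Lemma gram_sym : (gram lam x J)^T = gram lam x J.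
Proof.
rewrite /gram linearD /= tr_scalar_mx linear_sum /=; congr (_ + _).
by apply: eq_bigr => j _; rewrite trmx_mul trmxK.
Qed.

Lemma Qgram_ge v : 0 <= lam -> lam * Q 1%:M v v <= Q (gram lam x J) v v.
Proof.
move=> l0; rewrite Qgram lerDl sumr_ge0 // => j _; exact: sqr_ge0.
Qed.

Lemma gram_psd v : 0 <= lam -> 0 <= Q (gram lam x J) v v.
Proof.
move=> l0; apply: le_trans (Qgram_ge v l0); exact: mulr_ge0 (Q1_ge0 _).
Qed.

Lemma gram_unit : 0 < lam -> gram lam x J \in unitmx.
Proof.
move=> l0; rewrite -row_free_unit; apply: inj_row_free => v vA.
have h : Q (gram lam x J) v^T v^T = 0.
  by rewrite /Q trmxK vA mul0mx mxE.
have := Qgram_ge v^T (ltW l0); rewrite h => h2.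
have : Q 1%:M v^T v^T = 0.
  apply/eqP; rewrite eq_le Q1_ge0 andbT.
  by rewrite -(pmulr_rle0 _ l0).
by move/Q1_eq0 => /(congr1 trmx); rewrite trmxK linear0.
Qed.
End S3.

Section S4.
Variables (R : rcfType) (n : nat).
Implicit Types (M : 'M[R]_n) (u v w : 'cV[R]_n).

Lemma trinv M : M^T = M -> (invmx M)^T = invmx M.
Proof. by move=> sM; rewrite trmx_inv sM. Qed.

Lemma Qinv M v : M^T = M -> M \in unitmx ->
  Q M (invmx M *m v) (invmx M *m v) = Q (invmx M) v v.
Proof.
move=> sM uM; rewrite /Q trmx_mul trinv // !mulmxA -(mulmxA _ (invmx M) M).
by rewrite mulVmx // mulmx1.
Qed.

Lemma Qinv_lin M v z : M^T = M -> M \in unitmx ->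
  Q 1%:M v z = Q M (invmx M *m v) z.
Proof.
move=> sM uM; rewrite /Q trmx_mul trinv // -(mulmxA _ (invmx M) M).
by rewrite mulVmx // !mulmx1.
Qed.

Lemma Qinv_self M v : Q 1%:M v (invmx M *m v) = Q (invmx M) v v.
Proof. by rewrite /Q mulmx1 mulmxA. Qed.
End S4.

Lemma sumCS (R : rcfType) (I : Type) (J : seq I) (f g : I -> R) :
  \sum_(j <- J) f j * g j <=
  Num.sqrt (\sum_(j <- J) f j ^+ 2) * Num.sqrt (\sum_(j <- J) g j ^+ 2).
Proof.
have ge0 : forall h : I -> R, 0 <= \sum_(j <- J) h j ^+ 2.
  by move=> h; apply: sumr_ge0 => j _; exact: sqr_ge0.
rewrite -sqrtrM ?ge0 //; apply: (le_trans (ler_norm _)).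
rewrite -sqrtr_sqr ler_sqrt ?mulr_ge0 ?ge0 //.
apply: disc => [|t]; first exact: ge0.
have := ge0 (fun j => t * f j - g j) => /=.
suff -> : \sum_(j <- J) (t * f j - g j) ^+ 2 =
  (\sum_(j <- J) f j ^+ 2) * t ^+ 2 - 2 * (\sum_(j <- J) f j * g j) * t + \sum_(j <- J) g j ^+ 2 by [].
rewrite mulr_suml -mulrA mulr_suml mulr_sumr -sumrB -big_split /=.
by apply: eq_bigr => j _; ring.
Qed.

Section S5.
Variables (R : rcfType) (n : nat) (I : Type) (x y : I -> 'cV[R]_n) (J : seq I) (lam : R).

Lemma norm2Q (v : 'cV[R]_n) : norm2 v = Num.sqrt (Q 1%:M v v).
Proof. by rewrite /norm2 /Q mulmx1. Qed.

Lemma F6 (z : 'cV[R]_n) : 0 <= lam ->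
  Num.sqrt (Q (gram lam y J) z z) <= Num.sqrt (Q (gram lam x J) z z) +
    Num.sqrt (\sum_(j <- J) norm2 (x j - y j) ^+ 2) * Num.sqrt (Q 1%:M z z).
Proof.
move=> l0.
set S := \sum_(j <- J) _.
set zz := Q 1%:M z z.
set Sa := \sum_(j <- J) Q 1%:M (x j) z ^+ 2.
set Sd := \sum_(j <- J) Q 1%:M (x j - y j) z ^+ 2.
have zz0 : 0 <= zz by exact: Q1_ge0.
have S0 : 0 <= S by apply: sumr_ge0 => j _; exact: sqr_ge0.
have Sa0 : 0 <= Sa by apply: sumr_ge0 => j _; exact: sqr_ge0.
have Sd0 : 0 <= Sd by apply: sumr_ge0 => j _; exact: sqr_ge0.
have hSd : Sd <= S * zz.
  rewrite /S mulr_suml; apply: ler_sum => j _.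
  rewrite norm2Q sqr_sqrtr ?Q1_ge0 //; apply: CS; first by rewrite tr_scalar_mx.
  exact: Q1_ge0.
have hcross : \sum_(j <- J) Q 1%:M (x j) z * (- Q 1%:M (x j - y j) z) <=
    Num.sqrt Sa * Num.sqrt Sd.
  have h := sumCS J (fun j => Q 1%:M (x j) z) (fun j => - Q 1%:M (x j - y j) z).
  have e : \sum_(j <- J) (- Q 1%:M (x j - y j) z) ^+ 2 = Sd.
    by apply: eq_bigr => j _; rewrite sqrrN.
  by rewrite e in h.
have QA : Q (gram lam x J) z z = lam * zz + Sa by rewrite Qgram.
have QB : Q (gram lam y J) z z = lam * zz + Sa +
    2 * (\sum_(j <- J) Q 1%:M (x j) z * (- Q 1%:M (x j - y j) z)) + Sd.
  rewrite Qgram -!addrA; congr (_ + _).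
  rewrite /Sa /Sd mulr_sumr -!big_split /=; apply: eq_bigr => j _.
  have -> : Q 1%:M (y j) z = Q 1%:M (x j) z - Q 1%:M (x j - y j) z.
    by rewrite QBl opprB addrC subrK.
  ring.
have lz0 : 0 <= lam * zz by exact: mulr_ge0.
set qa := Num.sqrt (Q (gram lam x J) z z).
have qa0 : 0 <= qa by exact: sqrtr_ge0.
have qa2 : qa ^+ 2 = lam * zz + Sa by rewrite /qa sqr_sqrtr QA ?addr_ge0.
have saqa : Num.sqrt Sa <= qa by rewrite /qa ler_sqrt QA ?addr_ge0 // lerDr.
have sdw : Num.sqrt Sd <= Num.sqrt S * Num.sqrt zz by rewrite -sqrtrM // ler_sqrt ?mulr_ge0.
have w0 : 0 <= Num.sqrt S * Num.sqrt zz by rewrite mulr_ge0 ?sqrtr_ge0.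
have sa0 := sqrtr_ge0 Sa; have sd0 := sqrtr_ge0 Sd.
have sd2 : Num.sqrt Sd ^+ 2 = Sd by rewrite sqr_sqrtr.
have sa2 : Num.sqrt Sa ^+ 2 = Sa by rewrite sqr_sqrtr.
rewrite -[X in _ <= X]ger0_norm ?addr_ge0 // -sqrtr_sqr ler_sqrt ?sqr_ge0 // QB.
set w := Num.sqrt S * Num.sqrt zz in sdw w0 *.
set c := \sum_(j <- J) _ in hcross *.
set sa := Num.sqrt Sa in saqa sa0 sa2 *.
set sd := Num.sqrt Sd in sdw sd0 sd2 *.
rewrite -qa2 -sd2.
have h1 : sa * sd <= qa * w by apply: ler_pM.
have h2 : sd * sd <= w * w by apply: ler_pM.
have hc : c <= sa * sd by [].
rewrite !expr2; lra.
Qed.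
End S5.

Lemma rank0_zero (R : rcfType) (n : nat) (I : eqType) (x : I -> 'cV[R]_n) :
  fam_rank x 0 -> forall j, x j = 0.
Proof.
move=> [_ h] j; have := h [:: j]; rewrite leqn0 mxrank_eq0 => /eqP E.
apply/matrixP => k l; rewrite (ord1 l).
have := congr1 (fun M : 'M_(1, n) => M 0 k) E; rewrite !mxE /=.
by [].
Qed.

Lemma hr_lem (R : rcfType) (n : nat) (I : eqType) (x y : I -> 'cV[R]_n) (J : seq I) (r : nat) :
  fam_rank x r -> fam_rank y r ->
  Num.sqrt (\sum_(j <- J) norm2 (x j - y j) ^+ 2) <=
  2 * Num.sqrt r%:R * Num.sqrt (\sum_(j <- J) norm2 (x j - y j) ^+ 2).
Proof.
move=> hx hy; have s0 := sqrtr_ge0 (\sum_(j <- J) norm2 (x j - y j) ^+ 2).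
case: r hx hy => [|r] hx hy.
  rewrite big1 ?sqrtr0 ?mulr0 // => j _.
  by rewrite (rank0_zero hx) (rank0_zero hy) subr0 /norm2 mulmx0 mxE sqrtr0 expr0n.
have h1 : 1 <= Num.sqrt (r.+1)%:R :> R.
  have : Num.sqrt 1 <= Num.sqrt (r.+1)%:R :> R by rewrite ler_sqrt // ler1n.
  by rewrite sqrtr1.
set s := Num.sqrt _ in s0 *.
set q := Num.sqrt _ in h1 *.
have : s <= q * s by rewrite ler_peMl.
lra.
Qed.

Unset Implicit Arguments.
Theorem lemma13 (R : rcfType) (n : nat) (I : eqType) (x y : I -> 'cV[R]_n)
  (J : seq I) (lam : R) (r : nat) :
  uniq J -> 0 < lam ->
  fam_rank x r -> fam_rank y r ->
  forall i : I,
    mnorm (invmx (gram lam x J)) (x i) <=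
      (Num.sqrt lam)^-1 * norm2 (x i - y i) +
      (1 + 2 * Num.sqrt r%:R * Num.sqrt (\sum_(j <- J) norm2 (x j - y j) ^+ 2)
             / Num.sqrt lam) * mnorm (invmx (gram lam y J)) (y i).
Proof.
move=> _ l0 hx hy i.
have hr := hr_lem J hx hy.
have l0' := ltW l0.
set A := gram lam x J; set B := gram lam y J.
have sA : A^T = A by exact: gram_sym.
have sB : B^T = B by exact: gram_sym.
have uA : A \in unitmx by exact: gram_unit.
have uB : B \in unitmx by exact: gram_unit.
have mE : forall (M : 'M[R]_n) v, mnorm M v = Num.sqrt (Q M v v) by [].
set z := invmx A *m x i.
set w := invmx B *m y i.
have hP1 : Q (invmx A) (x i) (x i) = Q A z z by rewrite Qinv.
have hP2 : Q (invmx A) (x i) (x i) = Q 1%:M (x i) z by rewrite Qinv_self.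
have hsplit : Q 1%:M (x i) z = Q 1%:M (x i - y i) z + Q 1%:M (y i) z.
  by rewrite QBl subrK.
have h3 : Q 1%:M (x i - y i) z <= norm2 (x i - y i) * Num.sqrt (Q 1%:M z z).
  by rewrite norm2Q; apply: CSs; [rewrite tr_scalar_mx | exact: Q1_ge0].
have h4 : lam * Q 1%:M z z <= Q (invmx A) (x i) (x i) by rewrite hP1; exact: Qgram_ge.
have h5 : Q 1%:M (y i) z = Q B w z by exact: Qinv_lin.
have h6 : Q B w z <= mnorm (invmx B) (y i) * Num.sqrt (Q B z z).
  by rewrite mE -Qinv //; apply: CSs => // v; exact: gram_psd.
have h7 := F6 x y J z l0'.
rewrite -/A -/B in h7.
rewrite mE.
set P := Q (invmx A) (x i) (x i) in hP1 hP2 h4 *.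
have P0 : 0 <= P by rewrite hP1; exact: gram_psd.
set p := Num.sqrt P.
have p0 : 0 <= p by exact: sqrtr_ge0.
have pP : p ^+ 2 = P by rewrite sqr_sqrtr.
have pA : Num.sqrt (Q A z z) = p by rewrite -hP1.
rewrite pA in h7.
set sz := Num.sqrt (Q 1%:M z z) in h3 h7.
have sz0 : 0 <= sz by exact: sqrtr_ge0.
set sl := Num.sqrt lam.
have sl0 : 0 < sl by rewrite sqrtr_gt0.
have hsz : sl * sz <= p.
  by rewrite -sqrtrM // ler_sqrt.
set nb := mnorm (invmx B) (y i) in h6 *.
have nb0 : 0 <= nb by exact: sqrtr_ge0.
set nd := norm2 (x i - y i) in h3 *.
have nd0 : 0 <= nd by exact: sqrtr_ge0.
set sS := Num.sqrt (\sum_(j <- J) _) in h7 hr *.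
have sS0 : 0 <= sS by exact: sqrtr_ge0.
set sr := Num.sqrt r%:R in hr *.
set qB := Num.sqrt (Q B z z) in h6 h7.
have qB0 : 0 <= qB by exact: sqrtr_ge0.
have hmain : P <= nd * sz + nb * (p + sS * sz).
  rewrite hP2 hsplit h5.
  have : nb * qB <= nb * (p + sS * sz) by apply: ler_wpM2l.
  lra.
have key : sl * p <= nd + nb * (sl + sS).
  have [pz|pnz] := eqVneq p 0.
    by rewrite pz mulr0 addr_ge0 // mulr_ge0 // addr_ge0 // ltW.
  have pp : 0 < p by rewrite lt_def pnz p0.
  rewrite -(ler_pM2l pp).
  have e1 : nd * (sl * sz) <= nd * p by apply: ler_wpM2l.
  have e2 : nb * sS * (sl * sz) <= nb * sS * p by apply: ler_wpM2l => //; exact: mulr_ge0.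
  have e3 : sl * P <= sl * (nd * sz + nb * (p + sS * sz)) by apply: ler_wpM2l => //; exact: ltW sl0.
  rewrite -pP expr2 in e3.
  have : p * (sl * p) = sl * (p * p) by ring.
  have : p * (nd + nb * (sl + sS)) = nd * p + nb * sS * p + sl * nb * p by ring.
  have : sl * (nd * sz + nb * (p + sS * sz)) = nd * (sl * sz) + nb * sS * (sl * sz) + sl * nb * p by ring.
  lra.
have e4 : nb * sS <= nb * (2 * sr * sS) by apply: ler_wpM2l.
have -> : sl^-1 * nd + (1 + 2 * sr * sS / sl) * nb = (nd + nb * (sl + 2 * sr * sS)) / sl.
  by field; rewrite gt_eqF.
rewrite ler_pdivlMr // mulrC.
have : nb * (sl + sS) = nb * sl + nb * sS by ring.
have : nb * (sl + 2 * sr * sS) = nb * sl + nb * (2 * sr * sS) by ring.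
lra.
Qed.
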